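(* Assume Assumption 1, and assume that for every finite collection of samples one of the following holds: (1) the game $\mathcal G$ admits a unique Nash equilibrium; or (2) $g(x,\theta)=\tilde g(\sigma(x),\theta)$ depends on $x$ only through the aggregate $\sigma(x)=\sum_{i\in\mathcal N}x_i$, and all Nash equilibria of $\mathcal G$ have the same aggregate $\sigma(x)$. Given samples $\theta_1,\dots,\theta_M$, let $(x^*,y^* )$ be the minimum-Euclidean-norm solution of $\mathrm{VI}(F,\mathcal X\times\Delta_M)$ (so $x^*=\Phi(\theta_1,\dots,\theta_M)$), and let $\mathcal Y^*=\{m\in\{1,\dots,M\}: y^*_m>0\}$. Then $\{\theta_m\}_{m\in\mathcal Y^*}$ is a compression set, i.e. $\Phi(\{\theta_m\}_{m\in\mathcal Y^*})=\Phi(\theta_1,\dots,\theta_M)=x^*$.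
   Context: Let $\mathcal N=\{1,\dots,N\}$ be a set of agents. Agent $i$ chooses $x_i\in\mathcal X_i\subset\mathbb R^n$; write $x=(x_i)_{i\in\mathcal N}\in\mathcal X=\mathcal X_1\times\cdots\times\mathcal X_N\subset\mathbb R^{nN}$ and $x_{-i}=(x_j)_{j\neq i}$. Let $\Theta$ be a set, $f_i:\mathbb R^{nN}\to\mathbb R$, $g:\mathbb R^{nN}\times\Theta\to\mathbb R$. For samples $S=\{\vartheta_1,\dots,\vartheta_K\}$, the game $\mathcal G(S)$ has each agent $i$ minimize over $x_i\in\mathcal X_i$ the cost $f_i(x)+\max_{\vartheta\in S}g(x,\vartheta)$; a Nash equilibrium is $x^*\in\mathcal X$ with $x^*_i$ optimal for each $i$ given $x^*_{-i}$. Assumption 1 (in case (2) with $g(\cdot,x_{-i},\theta)$ read as $\tilde g(\sigma(\cdot,x_{-i}),\theta)$): (i) for every $\theta\in\Theta$ and every $x_{-i}\in\prod_{j\ne i}\mathcal X_j$, $f_i(\cdot,x_{-i})+g(\cdot,x_{-i},\theta)$ is convex and continuously differentiable, and each $\mathcal X_i$ is nonempty, compact and convex; (ii) for every $\theta$ and $i$, $g(\cdot,\theta)$ and $f_i$ are twice differentiable on an open convex set containing $\mathcal X$; (iii) there are $\chi^f,\chi^g\in\mathbb R$ with $\chi^f+\chi^g\ge0$ such that for all $u,v\in\mathbb R^{nN}$ and $\theta\in\Theta$: $(u-v)^\top\big((\nabla_{u_i}f_i(u))_{i}-(\nabla_{v_i}f_i(v))_{i}\big)\ge\chi^f\|u-v\|^2$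 and $(u-v)^\top(\nabla_u g(u,\theta)-\nabla_v g(v,\theta))\ge\chi^g\|u-v\|^2$. For samples $\vartheta_1,\dots,\vartheta_K$: $\Delta_K=\{y\in\mathbb R^K:y\ge0,\sum_m y_m=1\}$, $\hat g(x,y)=\sum_m y_m g(x,\vartheta_m)$, $F(x,y)=\big((\nabla_{x_i}f_i(x)+\nabla_{x_i}\hat g(x,y))_i,\ -(g(x,\vartheta_m))_{m=1}^K\big)$; $\mathrm{VI}(F,\mathcal X\times\Delta_K)$: find $z^*\in\mathcal X\times\Delta_K$ with $(z-z^* )^\top F(z^* )\ge0$ for all $z\in\mathcal X\times\Delta_K$. $\Phi(\vartheta_1,\dots,\vartheta_K)$ is the $x$-component of the minimum-Euclidean-norm solution of this VI. A subcollection $\mathcal C$ of $\{\theta_1,\dots,\theta_M\}$ is a compression set if $\Phi(\mathcal C)=\Phi(\theta_1,\dots,\theta_M)$. *)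

(* Defs.v *)
From mathcomp Require Import all_boot.
From Stdlib Require Import Reals.
Set Implicit Arguments. Unset Strict Implicit. Unset Printing Implicit Defensive.
Open Scope R_scope.

Definition rsum (I : finType) (F : I -> R) : R := \big[Rplus/0]_(i : I) F i.

Definition adot (n : nat) (a b : 'I_n -> R) : R := rsum (fun k => a k * b k).
Definition anorm (n : nat) (a : 'I_n -> R) : R := sqrt (adot a a).
Definition asub (n : nat) (a b : 'I_n -> R) : 'I_n -> R := fun k => a k - b k.
Definition acomb (n : nat) (t : R) (a b : 'I_n -> R) : 'I_n -> R :=
  fun k => t * a k + (1 - t) * b k.

Definition prof (N n : nat) := 'I_N -> 'I_n -> R.
Definition pdot (N n : nat) (x y : prof N n) : R := rsum (fun i => adot (x i) (y i)).
Definition pnorm (N n : nat) (x : prof N n) : R := sqrt (pdot x x).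
Definition padd (N n : nat) (x y : prof N n) : prof N n := fun i k => x i k + y i k.
Definition psub (N n : nat) (x y : prof N n) : prof N n := fun i k => x i k - y i k.
Definition pscale (N n : nat) (t : R) (x : prof N n) : prof N n := fun i k => t * x i k.
Definition pcomb (N n : nat) (t : R) (x y : prof N n) : prof N n :=
  fun i k => t * x i k + (1 - t) * y i k.

Definition upd (N n : nat) (x : prof N n) (i : 'I_N) (z : 'I_n -> R) : prof N n :=
  fun j => if j == i then z else x j.

Definition aggr (N n : nat) (x : prof N n) : 'I_n -> R := fun k => rsum (fun i => x i k).

Definition is_grad_at (N n : nat) (F : prof N n -> R) (v x : prof N n) : Prop :=
  forall eps, 0 < eps -> exists delta, 0 < delta /\
    forall h, pnorm h < delta ->
      Rabs (F (padd x h) - F x - pdot v h) <= eps * pnorm h.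

Definition is_agrad_at (n : nat) (F : ('I_n -> R) -> R) (v z : 'I_n -> R) : Prop :=
  forall eps, 0 < eps -> exists delta, 0 < delta /\
    forall h, anorm h < delta ->
      Rabs (F (fun k => z k + h k) - F z - adot v h) <= eps * anorm h.

Definition plinear (N n : nat) (L : prof N n -> prof N n) : Prop :=
  (forall u v, L (padd u v) = padd (L u) (L v)) /\
  (forall t u, L (pscale t u) = pscale t (L u)).

Definition differentiable_map_at (N n : nat) (G : prof N n -> prof N n) (x : prof N n) : Prop :=
  exists L, plinear L /\
    forall eps, 0 < eps -> exists delta, 0 < delta /\
      forall h, pnorm h < delta ->
        pnorm (psub (psub (G (padd x h)) (G x)) (L h)) <= eps * pnorm h.

Definition acontinuous (n : nat) (H : ('I_n -> R) -> ('I_n -> R)) : Prop :=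
  forall z eps, 0 < eps -> exists delta, 0 < delta /\
    forall w, anorm (asub w z) < delta -> anorm (asub (H w) (H z)) < eps.

Definition anonempty (n : nat) (A : ('I_n -> R) -> Prop) : Prop := exists a, A a.
Definition aconvex (n : nat) (A : ('I_n -> R) -> Prop) : Prop :=
  forall a b t, A a -> A b -> 0 <= t <= 1 -> A (acomb t a b).
(* compact subset of R^n = closed and bounded (Heine-Borel) *)
Definition aclosed (n : nat) (A : ('I_n -> R) -> Prop) : Prop :=
  forall z, (forall eps, 0 < eps -> exists a, A a /\ anorm (asub a z) < eps) -> A z.
Definition abounded (n : nat) (A : ('I_n -> R) -> Prop) : Prop :=
  exists B, forall a, A a -> anorm a <= B.
Definition acompact (n : nat) (A : ('I_n -> R) -> Prop) : Prop :=
  aclosed A /\ abounded A.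
Definition aconvex_fun_on (n : nat) (A : ('I_n -> R) -> Prop) (h : ('I_n -> R) -> R) : Prop :=
  forall a b t, A a -> A b -> 0 <= t <= 1 ->
    h (acomb t a b) <= t * h a + (1 - t) * h b.

Definition popen (N n : nat) (U : prof N n -> Prop) : Prop :=
  forall x, U x -> exists r, 0 < r /\ forall z, pnorm (psub z x) < r -> U z.
Definition pconvex (N n : nat) (U : prof N n -> Prop) : Prop :=
  forall x y t, U x -> U y -> 0 <= t <= 1 -> U (pcomb t x y).

Definition inX (N n : nat) (Xs : 'I_N -> ('I_n -> R) -> Prop) (x : prof N n) : Prop :=
  forall i, Xs i (x i).

(* ---------- Assumption 1 ----------
   pgf i x  plays the role of  nabla_{x_i} f_i(x)  (partial gradient),
   gg x th  plays the role of  nabla_x g(x, th). *)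
Definition assumption1 (N n : nat) (Theta : Type) (Xs : 'I_N -> ('I_n -> R) -> Prop)
    (f : 'I_N -> prof N n -> R) (g : prof N n -> Theta -> R)
    (pgf : 'I_N -> prof N n -> ('I_n -> R)) (gg : prof N n -> Theta -> prof N n) : Prop :=
  (* the gradients appearing in (iii) and in F exist everywhere *)
  (forall i x, is_agrad_at (fun z => f i (upd x i z)) (pgf i x) (x i)) /\
  (forall th x, is_grad_at (fun u => g u th) (gg x th) x) /\
  (forall i, anonempty (Xs i) /\ acompact (Xs i) /\ aconvex (Xs i)) /\
  (forall th i x, (forall j, j <> i -> Xs j (x j)) ->
     aconvex_fun_on (Xs i) (fun z => f i (upd x i z) + g (upd x i z) th) /\
     acontinuous (fun z => fun k => pgf i (upd x i z) k + gg (upd x i z) th i k)) /\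
  (forall th, exists U : prof N n -> Prop, popen U /\ pconvex U /\
     (forall x, inX Xs x -> U x) /\
     (forall x, U x -> differentiable_map_at (fun u => gg u th) x)) /\
  (forall i, exists U : prof N n -> Prop, popen U /\ pconvex U /\
     (forall x, inX Xs x -> U x) /\
     exists G : prof N n -> prof N n,
       forall x, U x -> is_grad_at (f i) (G x) x /\ differentiable_map_at G x) /\
  exists chif chig : R, 0 <= chif + chig /\
    (forall u v : prof N n,
       chif * (pnorm (psub u v))^2 <= pdot (psub u v) (fun i k => pgf i u k - pgf i v k)) /\
    (forall (u v : prof N n) th,
       chig * (pnorm (psub u v))^2 <= pdot (psub u v) (psub (gg u th) (gg v th))).

Definition list_max (l : seq R) : R :=
  match l with [::] => 0 | a :: l' => foldr Rmax a l' end.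

Definition cost (N n : nat) (Theta : Type) (f : 'I_N -> prof N n -> R)
    (g : prof N n -> Theta -> R) (S : seq Theta) (i : 'I_N) (x : prof N n) : R :=
  f i x + list_max [seq g x th | th <- S].

Definition is_NE (N n : nat) (Theta : Type) (Xs : 'I_N -> ('I_n -> R) -> Prop)
    (f : 'I_N -> prof N n -> R) (g : prof N n -> Theta -> R) (S : seq Theta)
    (x : prof N n) : Prop :=
  inX Xs x /\
  forall i z, Xs i z -> cost f g S i x <= cost f g S i (upd x i z).

Definition sample (Theta : Type) (l : seq Theta) (m : 'I_(size l)) : Theta :=
  tnth (in_tuple l) m.

Definition in_simplex (K : nat) (y : 'I_K -> R) : Prop :=
  (forall m, 0 <= y m) /\ rsum y = 1.

Definition Fx (N n : nat) (Theta : Type) (pgf : 'I_N -> prof N n -> ('I_n -> R))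
    (gg : prof N n -> Theta -> prof N n) (l : seq Theta)
    (x : prof N n) (y : 'I_(size l) -> R) : prof N n :=
  fun i k => pgf i x k + rsum (fun m => y m * gg x (sample m) i k).

Definition Fy (N n : nat) (Theta : Type) (g : prof N n -> Theta -> R) (l : seq Theta)
    (x : prof N n) : 'I_(size l) -> R :=
  fun m => - g x (sample m).

Definition VI_sol (N n : nat) (Theta : Type) (Xs : 'I_N -> ('I_n -> R) -> Prop)
    (pgf : 'I_N -> prof N n -> ('I_n -> R)) (g : prof N n -> Theta -> R)
    (gg : prof N n -> Theta -> prof N n) (l : seq Theta)
    (x : prof N n) (y : 'I_(size l) -> R) : Prop :=
  inX Xs x /\ in_simplex y /\
  forall (x' : prof N n) (y' : 'I_(size l) -> R), inX Xs x' -> in_simplex y' ->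
    0 <= pdot (psub x' x) (Fx pgf gg x y) + rsum (fun m => (y' m - y m) * Fy g x m).

Arguments VI_sol {N n Theta} Xs pgf g gg l x y.

Definition znorm (N n K : nat) (x : prof N n) (y : 'I_K -> R) : R :=
  sqrt (pdot x x + rsum (fun m => y m * y m)).

Definition min_norm_sol (N n : nat) (Theta : Type) (Xs : 'I_N -> ('I_n -> R) -> Prop)
    (pgf : 'I_N -> prof N n -> ('I_n -> R)) (g : prof N n -> Theta -> R)
    (gg : prof N n -> Theta -> prof N n) (l : seq Theta)
    (x : prof N n) (y : 'I_(size l) -> R) : Prop :=
  VI_sol Xs pgf g gg l x y /\
  forall x' y', VI_sol Xs pgf g gg l x' y' -> znorm x y <= znorm x' y'.
Arguments min_norm_sol {N n Theta} Xs pgf g gg l x y.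

Definition Phi_is (N n : nat) (Theta : Type) (Xs : 'I_N -> ('I_n -> R) -> Prop)
    (pgf : 'I_N -> prof N n -> ('I_n -> R)) (g : prof N n -> Theta -> R)
    (gg : prof N n -> Theta -> prof N n) (l : seq Theta) (x : prof N n) : Prop :=
  (exists y, min_norm_sol Xs pgf g gg l x y) /\
  (forall x' y, min_norm_sol Xs pgf g gg l x' y -> x' = x).

Definition Rpos_b (r : R) : bool := if Rlt_dec 0 r then true else false.

Definition supp_samples (Theta : Type) (l : seq Theta) (y : 'I_(size l) -> R) : seq Theta :=
  [seq sample m | m <- enum 'I_(size l) & Rpos_b (y m)].
Arguments supp_samples {Theta} l y.
Arguments Phi_is {N n Theta} Xs pgf g gg l x.

(* Main.v *)
Set Warnings "-notation-overridden".
Require Import Defs.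
From HB Require Import structures.
From mathcomp Require Import all_boot.
From Stdlib Require Import Reals Lra FunctionalExtensionality Classical.
Open Scope R_scope.
Set Implicit Arguments. Unset Strict Implicit.

HB.instance Definition _ := Monoid.isComLaw.Build R 0 Rplus (fun a b c => esym (Rplus_assoc a b c)) Rplus_comm Rplus_0_l.
HB.instance Definition _ := Monoid.isMulLaw.Build R 0 Rmult Rmult_0_l Rmult_0_r.
HB.instance Definition _ := Monoid.isAddLaw.Build R Rmult Rplus Rmult_plus_distr_r Rmult_plus_distr_l.

Lemma rsum_ext (I : finType) (F G : I -> R) : (forall i, F i = G i) -> rsum F = rsum G.
Proof. by move=> H; rewrite /rsum; apply: eq_bigr => i _; rewrite H. Qed.

Lemma rsum_add (I : finType) (F G : I -> R) : rsum (fun i => F i + G i) = rsum F + rsum G.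
Proof. by rewrite /rsum big_split. Qed.

Lemma rsum_mull (I : finType) c (F : I -> R) : rsum (fun i => c * F i) = c * rsum F.
Proof. by rewrite /rsum -big_distrr. Qed.

Lemma rsum_mulr (I : finType) c (F : I -> R) : rsum (fun i => F i * c) = rsum F * c.
Proof. by rewrite /rsum -big_distrl. Qed.

Lemma rsum_0 (I : finType) : rsum (fun _ : I => 0) = 0.
Proof. by rewrite /rsum big1. Qed.

Lemma rsum_opp (I : finType) (F : I -> R) : rsum (fun i => - F i) = - rsum F.
Proof. have -> : - rsum F = (-1) * rsum F by ring. rewrite -rsum_mull.
apply: rsum_ext => i; ring. Qed.

Lemma rsum_sub (I : finType) (F G : I -> R) : rsum (fun i => F i - G i) = rsum F - rsum G.
Proof. rewrite /Rminus -rsum_opp -rsum_add. by []. Qed.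

Lemma rsum_ge0 (I : finType) (F : I -> R) : (forall i, 0 <= F i) -> 0 <= rsum F.
Proof. move=> H; rewrite /rsum; apply: (big_ind (fun x => 0 <= x)) => //; [lra| move=> *; lra]. Qed.

Lemma rsum_le (I : finType) (F G : I -> R) : (forall i, F i <= G i) -> rsum F <= rsum G.
Proof. move=> H; rewrite /rsum; apply: (big_ind2 (fun x y => x <= y)) => //; [lra| move=> *; lra]. Qed.

Lemma rsum_swap (I J : finType) (F : I -> J -> R) :
  rsum (fun i => rsum (fun j => F i j)) = rsum (fun j => rsum (fun i => F i j)).
Proof. by rewrite /rsum exchange_big. Qed.

Lemma rsum_pick (I : finType) (i0 : I) (F : I -> R) :
  rsum (fun j => if j == i0 then F j else 0) = F i0.
Proof. rewrite /rsum (bigD1 i0) //= eqxx big1 ?Rplus_0_r // => j /negbTE ->; by []. Qed.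

Lemma rsum_elem (I : finType) (F : I -> R) i0 : (forall i, 0 <= F i) -> F i0 <= rsum F.
Proof. move=> H; rewrite /rsum (bigD1 i0) //=.
have : 0 <= \big[Rplus/0]_(i | i != i0) F i.
  apply: (big_ind (fun x => 0 <= x)) => //; [lra| move=> *; lra].
lra. Qed.

Lemma rsum_eq0 (I : finType) (F : I -> R) : (forall i, 0 <= F i) -> rsum F = 0 -> forall i, F i = 0.
Proof. move=> H Hs i. have := rsum_elem i H. have := H i. lra. Qed.

Lemma adot_ge0 n (a : 'I_n -> R) : 0 <= adot a a.
Proof. apply: rsum_ge0 => k; nra. Qed.

Lemma pdot_ge0 N n (x : prof N n) : 0 <= pdot x x.
Proof. apply: rsum_ge0 => i; exact: adot_ge0. Qed.

Lemma anorm_ge0 n (a : 'I_n -> R) : 0 <= anorm a.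
Proof. exact: sqrt_pos. Qed.
Lemma pnorm_ge0 N n (x : prof N n) : 0 <= pnorm x.
Proof. exact: sqrt_pos. Qed.

Lemma adot_comm n (a b : 'I_n -> R) : adot a b = adot b a.
Proof. apply: rsum_ext => k; ring. Qed.
Lemma pdot_comm N n (x y : prof N n) : pdot x y = pdot y x.
Proof. apply: rsum_ext => i; exact: adot_comm. Qed.

Lemma adot_scale n (a b : 'I_n -> R) t : adot a (fun k => t * b k) = t * adot a b.
Proof. rewrite /adot -rsum_mull; apply: rsum_ext => k; ring. Qed.
Lemma pdot_scale N n (x y : prof N n) t : pdot x (pscale t y) = t * pdot x y.
Proof. rewrite /pdot -rsum_mull; apply: rsum_ext => i; exact: adot_scale. Qed.

Lemma sqrt_scale t p : 0 <= t -> 0 <= p -> sqrt (t * (t * p)) = t * sqrt p.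
Proof. move=> ht hp. rewrite -Rmult_assoc sqrt_mult; [|nra|lra].
by rewrite sqrt_square. Qed.

Lemma anorm_scale n (b : 'I_n -> R) t : 0 <= t -> anorm (fun k => t * b k) = t * anorm b.
Proof. move=> ht. rewrite /anorm -sqrt_scale //; last exact: adot_ge0.
congr sqrt. rewrite /adot -!rsum_mull. apply: rsum_ext => k /=; ring. Qed.

Lemma pnorm_scale N n (x : prof N n) t : 0 <= t -> pnorm (pscale t x) = t * pnorm x.
Proof. move=> ht. rewrite /pnorm -sqrt_scale //; last exact: pdot_ge0.
congr sqrt. rewrite /pdot -!rsum_mull. apply: rsum_ext => i. rewrite /adot -!rsum_mull. apply: rsum_ext => k /=. rewrite /pscale; ring. Qed.

Lemma adot_sub n (a b c : 'I_n -> R) : adot (fun k => a k - b k) c = adot a c - adot b c.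
Proof. rewrite /adot -rsum_sub; apply: rsum_ext => k; ring. Qed.
Lemma pdot_subl N n (x y z : prof N n) : pdot (psub x y) z = pdot x z - pdot y z.
Proof. rewrite /pdot -rsum_sub; apply: rsum_ext => i; exact: adot_sub. Qed.
Lemma pdot_subr N n (x y z : prof N n) : pdot z (psub x y) = pdot z x - pdot z y.
Proof. by rewrite pdot_comm pdot_subl pdot_comm (pdot_comm z y). Qed.

Lemma comp_le_anorm n (a : 'I_n -> R) k : Rabs (a k) <= anorm a.
Proof. rewrite -sqrt_Rsqr_abs /anorm. apply: sqrt_le_1_alt.
rewrite /Rsqr. apply: (rsum_elem (F := fun k => a k * a k)) => j; nra. Qed.

Lemma comp_le_pnorm N n (x : prof N n) i k : Rabs (x i k) <= pnorm x.
Proof. rewrite -sqrt_Rsqr_abs /pnorm. apply: sqrt_le_1_alt.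
apply: Rle_trans (_ : adot (x i) (x i) <= _).
  rewrite /Rsqr. apply: (rsum_elem (F := fun k => x i k * x i k)) => j; nra.
apply: (rsum_elem (F := fun i => adot (x i) (x i))) => j; exact: adot_ge0. Qed.

Lemma pdot_self0 N n (x : prof N n) : pdot x x = 0 -> forall i k, x i k = 0.
Proof. move=> H i k. have := comp_le_pnorm x i k. rewrite /pnorm H sqrt_0.
case: (Req_dec (x i k) 0) => // h; have := Rabs_pos_lt _ h; lra. Qed.

Lemma adot_self0 n (a : 'I_n -> R) : adot a a = 0 -> forall k, a k = 0.
Proof. move=> H k. have := comp_le_anorm a k. rewrite /anorm H sqrt_0.
case: (Req_dec (a k) 0) => // h; have := Rabs_pos_lt _ h; lra. Qed.

Lemma small0 a c : 0 <= c -> (forall eps, 0 < eps -> Rabs a <= eps * c) -> a = 0.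
Proof. move=> hc H. case: (Req_dec a 0) => // ha.
have hpa : 0 < Rabs a by apply: Rabs_pos_lt.
have := H (Rabs a / (2 * (c + 1))). 
have hd : 0 < 2 * (c + 1) by lra.
move=> /(_ (Rdiv_lt_0_compat _ _ hpa hd)) h.
have : Rabs a / (2 * (c + 1)) * c < Rabs a.
  apply: (Rmult_lt_reg_r (2 * (c+1))) => //. field_simplify; try lra. nra.
lra. Qed.

Lemma small_le a b c : 0 <= c -> (forall eps, 0 < eps -> a <= b + eps * c) -> a <= b.
Proof. move=> hc H. case: (Rle_dec a b) => // /Rnot_le_lt hab.
have hd : 0 < (a - b) / (2 * (c + 1)). apply: Rdiv_lt_0_compat; lra.
have := H _ hd.
have : (a - b) / (2 * (c + 1)) * c < a - b.
  apply: (Rmult_lt_reg_r (2 * (c+1))); first lra. field_simplify; try lra. nra.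
lra. Qed.

Lemma grad_dir N n (F : prof N n -> R) v x (d : prof N n) :
  is_grad_at F v x -> forall eps, 0 < eps -> exists T, 0 < T /\ forall t, 0 < t < T ->
   Rabs (F (padd x (pscale t d)) - F x - t * pdot v d) <= eps * (t * pnorm d).
Proof. move=> Hg eps he. case: (Hg eps he) => delta [hd Hh].
have hp := pnorm_ge0 d.
exists (delta / (pnorm d + 1)); split. apply: Rdiv_lt_0_compat; lra.
move=> t [ht1 ht2]. rewrite -pdot_scale -pnorm_scale; last lra. apply: Hh.
rewrite pnorm_scale; last lra.
have : t * (pnorm d + 1) < delta.
  move: ht2. move/(Rmult_lt_compat_r (pnorm d + 1)) => /(_ ltac:(lra)). 
  rewrite /Rdiv Rmult_assoc Rinv_l; lra.
nra. Qed.

Lemma agrad_dir n (F : ('I_n -> R) -> R) v z (d : 'I_n -> R) :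
  is_agrad_at F v z -> forall eps, 0 < eps -> exists T, 0 < T /\ forall t, 0 < t < T ->
   Rabs (F (fun k => z k + t * d k) - F z - t * adot v d) <= eps * (t * anorm d).
Proof. move=> Hg eps he. case: (Hg eps he) => delta [hd Hh].
have hp := anorm_ge0 d.
exists (delta / (anorm d + 1)); split. apply: Rdiv_lt_0_compat; lra.
move=> t [ht1 ht2]. rewrite -adot_scale -anorm_scale; last lra. apply: (Hh (fun k => t * d k)).
rewrite anorm_scale; last lra.
have : t * (anorm d + 1) < delta.
  move: ht2. move/(Rmult_lt_compat_r (anorm d + 1)) => /(_ ltac:(lra)). 
  rewrite /Rdiv Rmult_assoc Rinv_l; lra.
nra. Qed.

Lemma pick_t T1 T2 : 0 < T1 -> 0 < T2 -> exists t, (0 < t < T1) /\ (0 < t < T2) /\ t <= 1.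
Proof. move=> h1 h2. exists (Rmin (Rmin T1 T2) 1 / 2).
have a := Rmin_l (Rmin T1 T2) 1. have b := Rmin_r (Rmin T1 T2) 1.
have c := Rmin_l T1 T2. have e := Rmin_r T1 T2.
have : 0 < Rmin (Rmin T1 T2) 1. apply: Rmin_pos; [apply: Rmin_pos|]; lra.
lra. Qed.

Lemma abs_div_t t y eps p : 0 < t -> Rabs (t * y) <= eps * (t * p) -> Rabs y <= eps * p.
Proof. move=> ht. rewrite Rabs_mult (Rabs_pos_eq t); last lra.
move=> h. apply: (Rmult_le_reg_l t) => //. nra. Qed.

Lemma abs_diff a b : Rabs (a - b) <= Rabs a + Rabs b.
Proof. rewrite /Rminus. have := Rabs_triang a (-b). by rewrite Rabs_Ropp. Qed.

Lemma grad_unique N n (F : prof N n -> R) v w x : is_grad_at F v x -> is_grad_at F w x -> v = w.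
Proof.
move=> Hv Hw.
have key : forall d, pdot (psub v w) d = 0.
  move=> d. apply: (small0 (c := pnorm d)); first exact: pnorm_ge0.
  move=> eps he. have he2 : 0 < eps/2 by lra.
  case: (grad_dir d Hv he2) => T1 [hT1 H1].
  case: (grad_dir d Hw he2) => T2 [hT2 H2].
  case: (pick_t hT1 hT2) => t [ht1 [ht2 _]].
  have h1 := H1 t ht1. have h2 := H2 t ht2.
  rewrite pdot_subl. apply: (abs_div_t (t := t)); first lra.
  have -> : t * (pdot v d - pdot w d) =
    (F (padd x (pscale t d)) - F x - t * pdot w d) - (F (padd x (pscale t d)) - F x - t * pdot v d) by ring.
  apply: Rle_trans (abs_diff _ _) _. lra.
apply: functional_extensionality => i; apply: functional_extensionality => k.
have := pdot_self0 (key (psub v w)) i k. rewrite /psub. lra.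
Qed.

Lemma grad_line N n (F : prof N n -> R) v x d : is_grad_at F v x ->
  (forall t, F (padd x (pscale t d)) = F x) -> pdot v d = 0.
Proof. move=> Hv Hc. apply: (small0 (c := pnorm d)); first exact: pnorm_ge0.
move=> eps he. case: (grad_dir d Hv he) => T [hT H].
case: (pick_t hT hT) => t [ht _]. have := H t ht. rewrite Hc.
have -> : F x - F x - t * pdot v d = - (t * pdot v d) by ring. rewrite Rabs_Ropp.
apply: abs_div_t; lra. Qed.

Definition blk N n (i : 'I_N) (h : 'I_n -> R) : prof N n := upd (fun _ _ => 0) i h.

Lemma pdot_blk N n (v : prof N n) i h : pdot v (blk i h) = adot (v i) h.
Proof. rewrite /pdot -(rsum_pick i (fun j => adot (v j) h)). apply: rsum_ext => j.
rewrite /blk /upd. case: (j == i) => //. rewrite /adot (rsum_ext (G := fun _ => 0)) ?rsum_0 // => k /=; ring. Qed.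

Lemma pnorm_blk N n i (h : 'I_n -> R) : pnorm (blk (N:=N) i h) = anorm h.
Proof. rewrite /pnorm pdot_blk /blk /upd eqxx. by []. Qed.

Lemma padd_blk N n (x : prof N n) i h : padd x (blk i h) = upd x i (fun k => x i k + h k).
Proof. apply: functional_extensionality => j; apply: functional_extensionality => k.
rewrite /padd /blk /upd. case: eqP => [->|_] //=. ring. Qed.

Lemma upd_self N n (x : prof N n) i : upd x i (x i) = x.
Proof. apply: functional_extensionality => j. rewrite /upd. by case: eqP => // ->. Qed.

Lemma grad_block N n (F : prof N n -> R) v x i : is_grad_at F v x ->
  is_agrad_at (fun z => F (upd x i z)) (v i) (x i).
Proof. move=> H eps he; case: (H eps he) => delta [hd Hh]; exists delta; split => // h hh.
have := Hh (blk i h). rewrite pnorm_blk padd_blk pdot_blk upd_self. by apply. Qed.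

Lemma adot_subr n (a b c : 'I_n -> R) : adot c (fun k => a k - b k) = adot c a - adot c b.
Proof. rewrite /adot -rsum_sub; apply: rsum_ext => k /=; ring. Qed.

Lemma agrad_unique n (F : ('I_n -> R) -> R) v w z : is_agrad_at F v z -> is_agrad_at F w z -> v = w.
Proof.
move=> Hv Hw.
have key : forall d, adot (fun k => v k - w k) d = 0.
  move=> d. apply: (small0 (c := anorm d)); first exact: anorm_ge0.
  move=> eps he. have he2 : 0 < eps/2 by lra.
  case: (agrad_dir d Hv he2) => T1 [hT1 H1].
  case: (agrad_dir d Hw he2) => T2 [hT2 H2].
  case: (pick_t hT1 hT2) => t [ht1 [ht2 _]].
  have h1 := H1 t ht1. have h2 := H2 t ht2.
  rewrite adot_sub. apply: (abs_div_t (t := t)); first lra.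
  have -> : t * (adot v d - adot w d) =
    (F (fun k => z k + t * d k) - F z - t * adot w d) - (F (fun k => z k + t * d k) - F z - t * adot v d) by ring.
  apply: Rle_trans (abs_diff _ _) _. lra.
apply: functional_extensionality => k.
have := adot_self0 (key (fun k => v k - w k)) k. lra.
Qed.

Lemma adot_addl n (a b c : 'I_n -> R) : adot (fun k => a k + b k) c = adot a c + adot b c.
Proof. rewrite /adot -rsum_add; apply: rsum_ext => k /=; ring. Qed.

Lemma agrad_plus n (F G : ('I_n -> R) -> R) v w z : is_agrad_at F v z -> is_agrad_at G w z ->
  is_agrad_at (fun u => F u + G u) (fun k => v k + w k) z.
Proof. move=> Hv Hw eps he. have he2 : 0 < eps/2 by lra.
case: (Hv _ he2) => d1 [hd1 H1]. case: (Hw _ he2) => d2 [hd2 H2].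
exists (Rmin d1 d2); split; first exact: Rmin_pos.
move=> h hh. have := H1 h (Rlt_le_trans _ _ _ hh (Rmin_l _ _)).
have := H2 h (Rlt_le_trans _ _ _ hh (Rmin_r _ _)). rewrite adot_addl.
move=> a b.
have := Rabs_triang (F (fun k => z k + h k) - F z - adot v h) (G (fun k => z k + h k) - G z - adot w h).
have -> : F (fun k => z k + h k) + G (fun k => z k + h k) - (F z + G z) - (adot v h + adot w h) =
  (F (fun k => z k + h k) - F z - adot v h) + (G (fun k => z k + h k) - G z - adot w h) by ring.
lra. Qed.

Lemma abs_lb x : - x <= Rabs x.
Proof. rewrite -Rabs_Ropp; apply: Rle_abs. Qed.

Lemma conv_fo n (A : ('I_n -> R) -> Prop) h v a z :
  aconvex_fun_on A h -> A a -> A z -> is_agrad_at h v a ->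
  adot v (asub z a) <= h z - h a.
Proof. move=> Hc Ha Hz Hg. set d := asub z a.
apply: (small_le (c := anorm d)); first exact: anorm_ge0.
move=> eps he. case: (agrad_dir d Hg he) => T [hT H].
case: (pick_t hT hT) => t [ht [_ ht1]].
have := Hc z a t Hz Ha (conj (Rlt_le _ _ (proj1 ht)) ht1).
have -> : acomb t z a = (fun k => a k + t * d k).
  apply: functional_extensionality => k; rewrite /acomb /d /asub; ring.
move=> hc. have hl := Rle_trans _ _ _ (abs_lb _) (H t ht).
have : t * adot v d <= t * (h z - h a + eps * anorm d) by nra.
move/(Rmult_le_reg_l t) => /(_ (proj1 ht)). by [].
Qed.

Lemma diff_dir N n (G : prof N n -> prof N n) x d : differentiable_map_at G x ->
  exists K T, 0 <= K /\ 0 < T /\ forall t, 0 < t < T -> forall i k,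
   Rabs (G (padd x (pscale t d)) i k - G x i k) <= t * K.
Proof. case=> L [[Ladd Lsc] H]. case: (H 1 Rlt_0_1) => delta [hd Hh].
have hp := pnorm_ge0 d. have hq := pnorm_ge0 (L d).
exists (pnorm d + pnorm (L d)), (delta / (pnorm d + 1)). split; first lra. split.
  apply: Rdiv_lt_0_compat; lra.
move=> t [ht1 ht2] i k.
have hlt : pnorm (pscale t d) < delta.
  rewrite pnorm_scale; last lra.
  have : t * (pnorm d + 1) < delta.
    move: ht2. move/(Rmult_lt_compat_r (pnorm d + 1)) => /(_ ltac:(lra)).
    rewrite /Rdiv Rmult_assoc Rinv_l; lra.
  nra.
have := Hh _ hlt. rewrite Lsc pnorm_scale; last lra.
set P := psub _ _. move=> hP. have := comp_le_pnorm P i k.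
have e : P i k = G (padd x (pscale t d)) i k - G x i k - t * L d i k by [].
rewrite e => b. have a := comp_le_pnorm (L d) i k.
have -> : G (padd x (pscale t d)) i k - G x i k =
   (G (padd x (pscale t d)) i k - G x i k - t * L d i k) + t * L d i k by ring.
apply: Rle_trans (Rabs_triang _ _) _.
rewrite Rabs_mult (Rabs_pos_eq t); last lra. nra. Qed.

Lemma pdot_zero_l N n (u v : prof N n) : (forall i k, u i k = 0) -> pdot u v = 0.
Proof. move=> H. rewrite /pdot (rsum_ext (G := fun _ => 0)) ?rsum_0 // => i.
rewrite /adot (rsum_ext (G := fun _ => 0)) ?rsum_0 // => k. rewrite H; ring. Qed.

Section VI.
Variables (N n : nat) (Theta : Type) (Xs : 'I_N -> ('I_n -> R) -> Prop)
    (pgf : 'I_N -> prof N n -> ('I_n -> R)) (g : prof N n -> Theta -> R)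
    (gg : prof N n -> Theta -> prof N n).

Definition vi_x (l : seq Theta) x (y : 'I_(size l) -> R) :=
  forall x', inX Xs x' -> 0 <= pdot (psub x' x) (Fx pgf gg x y).
Definition vi_y (l : seq Theta) x (y : 'I_(size l) -> R) :=
  forall w : 'I_(size l) -> R, in_simplex w -> rsum (fun m => w m * g x (sample m)) <= rsum (fun m => y m * g x (sample m)).

Lemma vi_split l x y : VI_sol Xs pgf g gg l x y <->
  inX Xs x /\ in_simplex y /\ vi_x x y /\ vi_y x y.
Proof. split.
- case=> hx [hy H]. split => //; split => //; split.
  + move=> x' hx'. have := H x' y hx' hy.
    rewrite (rsum_ext (G := fun _ => 0)) ?rsum_0; first lra. move=> m; ring.
  + move=> w hw. have := H x w hx hw. rewrite pdot_zero_l; last by move=> i k; rewrite /psub; ring.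
    rewrite /Fy. have -> : rsum (fun m => (w m - y m) * - g x (sample m)) =
      rsum (fun m => y m * g x (sample m)) - rsum (fun m => w m * g x (sample m)).
      rewrite -rsum_sub. apply: rsum_ext => m; ring.
    lra.
- case=> hx [hy [Hx Hy]]. split => //; split => // x' y' hx' hy'.
  have := Hx x' hx'. have := Hy y' hy'.
  have -> : rsum (fun m => (y' m - y m) * Fy g x m) =
      rsum (fun m => y m * g x (sample m)) - rsum (fun m => y' m * g x (sample m)).
    rewrite -rsum_sub. apply: rsum_ext => m; rewrite /Fy; ring.
  lra.
Qed.
End VI.

Lemma foldr_max_props (l' : seq R) a :
  a <= foldr Rmax a l' /\ (forall i, (leq (i).+1 (size l')) -> nth 0 l' i <= foldr Rmax a l') /\
  (foldr Rmax a l' = a \/ exists i, (leq (i).+1 (size l')) /\ foldr Rmax a l' = nth 0 l' i).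
Proof. elim: l' => [|b l' [IH1 [IH2 IH3]]] /=.
- split; first lra. split; [by [] | by left].
- split; first by apply: Rle_trans IH1 (Rmax_r _ _).
  split.
  + case=> [|i] /= hi; first exact: Rmax_l. apply: Rle_trans (IH2 i hi) (Rmax_r _ _).
  + case: (Rle_dec b (foldr Rmax a l')) => hb.
    * rewrite Rmax_right //. case: IH3 => [->|[i [hi ->]]]; first by left.
      right; by exists i.+1.
    * rewrite Rmax_left; last lra. right; by exists O.
Qed.

Lemma LM_ge (s : seq R) i : (leq (i).+1 (size s)) -> nth 0 s i <= list_max s.
Proof. case: s => [|a l'] //= hi. have [h1 [h2 _]] := foldr_max_props l' a.
case: i hi => [|i] hi //=. exact: h2. Qed.

Lemma LM_att (s : seq R) : s <> [::] -> exists i, (leq (i).+1 (size s)) /\ list_max s = nth 0 s i.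
Proof. case: s => [|a l'] // _ /=. have [_ [_ [h|[i [hi h]]]]] := foldr_max_props l' a.
  by exists O. by exists i.+1. Qed.

Lemma sample_nth (Theta : Type) (l : seq Theta) (m : 'I_(size l)) x0 : sample m = nth x0 l m.
Proof. by rewrite /sample (tnth_nth x0). Qed.

Lemma LM_ge_sample (Theta : Type) (l : seq Theta) (G : Theta -> R) (m : 'I_(size l)) :
  G (sample m) <= list_max [seq G th | th <- l].
Proof. have hm : (leq (m).+1 (size [seq G th | th <- l])) by rewrite size_map.
have := LM_ge hm. by rewrite (nth_map (sample m)) // -sample_nth. Qed.

Lemma LM_att_sample (Theta : Type) (l : seq Theta) (G : Theta -> R) : l <> [::] ->
  exists m : 'I_(size l), list_max [seq G th | th <- l] = G (sample m).
Proof. move=> hl. have : [seq G th | th <- l] <> [::] by case: l hl.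
case/LM_att => i [hi ->]. rewrite size_map in hi. exists (Ordinal hi).
case: l hl hi => [//|th l'] _ hi. by rewrite (nth_map th) // (sample_nth _ th). Qed.

Lemma simplex_nonempty (Theta : Type) (l : seq Theta) (y : 'I_(size l) -> R) :
  in_simplex y -> l <> [::].
Proof. case=> _ h e. move: y h. rewrite e => y. rewrite /rsum big_ord0. lra. Qed.

Lemma unit_simplex K (m0 : 'I_K) : in_simplex (fun m => if m == m0 then 1 else 0).
Proof. split. move=> m; case: (m == m0); lra. rewrite (rsum_ext (G := fun m => if m == m0 then 1 else 0)) //. by rewrite (rsum_pick m0 (fun _ => 1)). Qed.

Lemma rsum_unit K (m0 : 'I_K) (F : 'I_K -> R) :
  rsum (fun m => (if m == m0 then 1 else 0) * F m) = F m0.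
Proof. rewrite -(rsum_pick m0 F). apply: rsum_ext => m. case: (m == m0); ring. Qed.

Lemma rsum_convex K (y : 'I_K -> R) (F : 'I_K -> R) c : in_simplex y -> (forall m, F m <= c) ->
  rsum (fun m => y m * F m) <= c.
Proof. case=> hy hs hF. apply: Rle_trans (_ : rsum (fun m => y m * c) <= _).
  apply: rsum_le => m. have := hy m; have := hF m; nra.
rewrite rsum_mulr hs; lra. Qed.

Lemma vi_NE (N n : nat) (Theta : Type) (Xs : 'I_N -> ('I_n -> R) -> Prop)
    (f : 'I_N -> prof N n -> R) (g : prof N n -> Theta -> R)
    (pgf : 'I_N -> prof N n -> ('I_n -> R)) (gg : prof N n -> Theta -> prof N n)
    (l : seq Theta) (x : prof N n) (y : 'I_(size l) -> R) :
  (forall i x, is_agrad_at (fun z => f i (upd x i z)) (pgf i x) (x i)) ->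
  (forall th x, is_grad_at (fun u => g u th) (gg x th) x) ->
  (forall th i x, (forall j, j <> i -> Xs j (x j)) ->
     aconvex_fun_on (Xs i) (fun z => f i (upd x i z) + g (upd x i z) th)) ->
  VI_sol Xs pgf g gg l x y -> is_NE Xs f g l x.
Proof.
move=> Hf Hg Hc /vi_split [hx [hy [Hvx Hvy]]]. split => // i z hz.
have hl := simplex_nonempty hy.
have [hy0 hy1] := hy.
set d := asub z (x i).
have Hm : forall m : 'I_(size l), adot (fun k => pgf i x k + gg x (sample m) i k) d <=
    (f i (upd x i z) + g (upd x i z) (sample m)) - (f i x + g x (sample m)).
  move=> m. have := conv_fo (Hc (sample m) i x (fun j _ => hx j)) (hx i) hz
     (agrad_plus (Hf i x) (grad_block i (Hg (sample m) x))).
  by rewrite upd_self.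
have Hsum : rsum (fun m => y m * adot (fun k => pgf i x k + gg x (sample m) i k) d) <=
   rsum (fun m => y m * ((f i (upd x i z) + g (upd x i z) (sample m)) - (f i x + g x (sample m)))).
  apply: rsum_le => m. have := Hm m; have := hy0 m; nra.
have E1 : rsum (fun m => y m * adot (fun k => pgf i x k + gg x (sample m) i k) d) =
   adot (Fx pgf gg x y i) d.
  rewrite /adot /Fx.
  rewrite (rsum_ext (G := fun m => rsum (fun k => y m * ((pgf i x k + gg x (sample m) i k) * d k)))); last first.
    move=> m; by rewrite rsum_mull.
  rewrite rsum_swap. apply: rsum_ext => k.
  rewrite (rsum_ext (G := fun m => (pgf i x k * d k) * y m + (y m * gg x (sample m) i k) * d k)); last first.
    move=> m; ring.
  rewrite rsum_add rsum_mull rsum_mulr hy1. ring.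
have E2 : rsum (fun m => y m * ((f i (upd x i z) + g (upd x i z) (sample m)) - (f i x + g x (sample m)))) =
   (f i (upd x i z) + rsum (fun m => y m * g (upd x i z) (sample m))) -
   (f i x + rsum (fun m => y m * g x (sample m))).
  rewrite (rsum_ext (G := fun m => (f i (upd x i z) - f i x) * y m +
     (y m * g (upd x i z) (sample m) - y m * g x (sample m)))); last first.
    move=> m; ring.
  rewrite rsum_add rsum_mull hy1 rsum_sub. ring.
have hupd : inX Xs (upd x i z).
  move=> j. rewrite /upd. by case: eqP => [->|].
have Hv := Hvx _ hupd.
have e : psub (upd x i z) x = blk i d.
  apply: functional_extensionality => j; apply: functional_extensionality => k.
  rewrite /psub /blk /upd /d /asub. case: eqP => [->|_] /=; ring.
rewrite e pdot_comm pdot_blk -E1 in Hv.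
rewrite /cost.
case: (LM_att_sample (g x) hl) => ms hms. rewrite hms.
have h1 := Hvy _ (unit_simplex ms). rewrite rsum_unit in h1.
have h2 : rsum (fun m => y m * g (upd x i z) (sample m)) <= list_max [seq g (upd x i z) th | th <- l].
  apply: rsum_convex => // m. exact: LM_ge_sample.
lra.
Qed.

Lemma Rpos_b_false r : 0 <= r -> ~~ Rpos_b r -> r = 0.
Proof. move=> h0. rewrite /Rpos_b; case: Rlt_dec => // /Rnot_lt_le h _; lra. Qed.

Lemma rsum_enum (T : finType) (F : T -> R) : \big[Rplus/0]_(m <- enum T) F m = rsum F.
Proof. rewrite /rsum big_enum. apply: eq_bigl => m. by []. Qed.

Section Supp.
Variables (Theta : Type) (l : seq Theta) (ys : 'I_(size l) -> R) (d0 : 'I_(size l)).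

Definition sset := [seq m <- enum 'I_(size l) | Rpos_b (ys m)].
Lemma supp_eq : supp_samples l ys = [seq sample m | m <- sset].
Proof. by []. Qed.

Definition idx (j : 'I_(size (supp_samples l ys))) : 'I_(size l) := nth d0 sset j.

Lemma size_supp : size (supp_samples l ys) = size sset.
Proof. by rewrite supp_eq size_map. Qed.

Lemma supp_R1 (j : 'I_(size (supp_samples l ys))) : sample j = sample (idx j).
Proof. rewrite (sample_nth _ (sample d0)). have hj : leq j.+1 (size sset).
  rewrite -size_supp; exact: ltn_ord.
move: hj. rewrite /idx. move: (nat_of_ord j) => k hk.
by rewrite supp_eq (nth_map d0). Qed.

Lemma sum_idx (H : 'I_(size l) -> R) : (forall m, ~~ Rpos_b (ys m) -> H m = 0) ->
  rsum (fun j : 'I_(size (supp_samples l ys)) => H (idx j)) = rsum H.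
Proof. move=> hH. rewrite /rsum.
rewrite -(big_mkord xpredT (fun j => H (nth d0 sset j))) size_supp.
rewrite -(big_nth d0 xpredT H) big_filter big_mkcond -/(rsum _) -(rsum_enum H).
apply: eq_bigr => m _. case: ifP => // /negbT h. by rewrite hH. Qed.

Definition ext (w : 'I_(size (supp_samples l ys)) -> R) (m : 'I_(size l)) : R :=
  rsum (fun j => if idx j == m then w j else 0).

Lemma supp_R2 w (F : 'I_(size l) -> R) :
  rsum (fun m => ext w m * F m) = rsum (fun j => w j * F (idx j)).
Proof.
rewrite (rsum_ext (G := fun m => rsum (fun j => if idx j == m then w j * F m else 0))); last first.
  move=> m. rewrite /ext -rsum_mulr. apply: rsum_ext => j. case: (idx j == m) => //; ring.
rewrite rsum_swap. apply: rsum_ext => j.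
rewrite -(rsum_pick (idx j) (fun m => w j * F m)). apply: rsum_ext => m.
by rewrite eq_sym. Qed.

Lemma idx_inj j1 j2 : idx j1 = idx j2 -> j1 = j2.
Proof. rewrite /idx => e. apply: val_inj => /=. apply/eqP.
have h1 : leq j1.+1 (size sset) by rewrite -size_supp; exact: ltn_ord.
have h2 : leq j2.+1 (size sset) by rewrite -size_supp; exact: ltn_ord.
rewrite -(nth_uniq d0 h1 h2); first by rewrite e.
rewrite /sset filter_uniq //. exact: enum_uniq. Qed.

Lemma supp_R3 w j : ext w (idx j) = w j.
Proof. rewrite /ext -(rsum_pick j w). apply: rsum_ext => j'.
case: eqP => [/idx_inj ->|ne]; first by rewrite eqxx.
case: eqP => // e; by case: ne; rewrite e. Qed.

Lemma ext_simplex w : in_simplex w -> in_simplex (ext w).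
Proof. case=> h0 h1. split.
  move=> m. apply: rsum_ge0 => j. case: (idx j == m); [exact: h0 | lra].
rewrite (rsum_ext (G := fun m => ext w m * 1)); last by move=> m; ring.
rewrite supp_R2 (rsum_ext (G := w)) // => j; ring. Qed.

Lemma ext_sq w : rsum (fun m => ext w m * ext w m) = rsum (fun j => w j * w j).
Proof. rewrite supp_R2. apply: rsum_ext => j. by rewrite supp_R3. Qed.

Hypothesis ys0 : forall m, 0 <= ys m.

Lemma sum_idx_ys (F : 'I_(size l) -> R) :
  rsum (fun j => ys (idx j) * F (idx j)) = rsum (fun m => ys m * F m).
Proof. apply: (sum_idx (H := fun m => ys m * F m)) => m h.
by rewrite (Rpos_b_false (ys0 m) h) Rmult_0_l. Qed.

Lemma restr_simplex : in_simplex ys -> in_simplex (fun j => ys (idx j)).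
Proof. case=> _ h1. split; first by move=> j; exact: ys0.
rewrite (rsum_ext (G := fun j => ys (idx j) * (fun _ : 'I_(size l) => 1) (idx j))); last by move=> j /=; ring.
rewrite (sum_idx_ys (fun _ => 1)) (rsum_ext (G := ys)) // => m /=; ring. Qed.
End Supp.

Lemma rsum_lin3 (I : finType) (A B C D : I -> R) a b c :
  (forall i, A i = a * B i + b * C i + c * D i) -> rsum A = a * rsum B + b * rsum C + c * rsum D.
Proof. move=> H. rewrite (rsum_ext (G := fun i => a * B i + b * C i + c * D i)) //.
by rewrite !rsum_add !rsum_mull. Qed.

Lemma pdot_lin3 N n (A B C D : prof N n -> prof N n -> R) : True. Proof. by []. Qed.

Definition dsum N n (F : 'I_N -> 'I_n -> R) := rsum (fun i => rsum (fun k => F i k)).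

Lemma dsum_lin3 N n (A B C D : 'I_N -> 'I_n -> R) a b c :
  (forall i k, A i k = a * B i k + b * C i k + c * D i k) ->
  dsum A = a * dsum B + b * dsum C + c * dsum D.
Proof. move=> H. apply: rsum_lin3 => i. exact: rsum_lin3. Qed.

Lemma pdot_dsum N n (x y : prof N n) : pdot x y = dsum (fun i k => x i k * y i k).
Proof. by []. Qed.

Lemma aggr_padd N n (x h : prof N n) : aggr (padd x h) = (fun k => aggr x k + aggr h k).
Proof. apply: functional_extensionality => k. by rewrite /aggr /padd rsum_add. Qed.

Lemma aggr_pscale N n (t : R) (h : prof N n) : aggr (pscale t h) = (fun k => t * aggr h k).
Proof. apply: functional_extensionality => k. by rewrite /aggr /pscale rsum_mull. Qed.

Lemma aggr_psub N n (x y : prof N n) : aggr (psub x y) = (fun k => aggr x k - aggr y k).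
Proof. apply: functional_extensionality => k. by rewrite /aggr /psub rsum_sub. Qed.

Lemma aggr_pcomb N n t (x y : prof N n) : aggr (pcomb t x y) = (fun k => t * aggr x k + (1 - t) * aggr y k).
Proof. apply: functional_extensionality => k. by rewrite /aggr /pcomb rsum_add !rsum_mull. Qed.

Section Agg.
Variables (N n : nat) (Theta : Type) (g : prof N n -> Theta -> R)
  (gg : prof N n -> Theta -> prof N n) (gt : ('I_n -> R) -> Theta -> R).
Hypothesis Hg : forall th x, is_grad_at (fun u => g u th) (gg x th) x.
Hypothesis Hgt : forall x th, g x th = gt (aggr x) th.

Lemma gg_agg x x' th : aggr x = aggr x' -> gg x th = gg x' th.
Proof. move=> e. apply: (grad_unique (Hg th x)).
move=> eps he. case: (Hg th x' he) => delta [hd H]. exists delta; split => // h hh.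
rewrite !Hgt aggr_padd e -aggr_padd -!Hgt. exact: H. Qed.

Lemma agg_dir x d th : (forall k, aggr d k = 0) -> pdot (gg x th) d = 0.
Proof. move=> hd. apply: (grad_line (Hg th x)) => t.
rewrite !Hgt aggr_padd aggr_pscale. congr gt. apply: functional_extensionality => k.
rewrite hd; ring. Qed.
End Agg.

Lemma fin_unif (I : finType) (P : I -> R -> Prop) :
  (forall i, exists T, 0 < T /\ forall t, 0 < t < T -> P i t) ->
  exists T, 0 < T /\ forall t, 0 < t < T -> forall i, P i t.
Proof. move=> H.
suff: forall s : seq I, exists T, 0 < T /\ forall t, 0 < t < T -> forall i, i \in s -> P i t.
  case/(_ (enum I)) => T [hT HT]. exists T; split => // t ht i. apply: HT => //. by rewrite mem_enum.
elim=> [|a s [T [hT HT]]]. exists 1; split; [lra| by []].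
case: (H a) => Ta [hTa HTa]. exists (Rmin T Ta); split; first exact: Rmin_pos.
move=> t ht i. rewrite in_cons => /orP [/eqP ->|hi].
  apply: HTa. have := Rmin_r T Ta. lra.
apply: HT => //. have := Rmin_l T Ta. lra. Qed.

Lemma abs_rsum_le (I : finType) (F : I -> R) : Rabs (rsum F) <= rsum (fun i => Rabs (F i)).
Proof. apply: Rabs_le. split.
  rewrite -rsum_opp. apply: rsum_le => i. move: (Rle_abs (- F i)); rewrite Rabs_Ropp; lra.
apply: rsum_le => i. exact: Rle_abs. Qed.

Lemma abs_adot_le n (a b : 'I_n -> R) c : (forall k, Rabs (b k) <= c) ->
  Rabs (adot a b) <= rsum (fun k => Rabs (a k)) * c.
Proof. move=> H. rewrite -rsum_mulr. apply: Rle_trans (abs_rsum_le _) _.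
apply: rsum_le => k. rewrite Rabs_mult. apply: Rmult_le_compat_l; [exact: Rabs_pos | exact: H]. Qed.

Lemma rsum_single (I : finType) (i : I) (F : I -> R) : (forall j, j = i) -> rsum F = F i.
Proof. move=> H. rewrite -(rsum_pick i F). apply: rsum_ext => j. by rewrite (H j) eqxx. Qed.

Lemma cdot N n K (d : prof N n) (y : 'I_K -> R) (w : 'I_K -> prof N n) :
  pdot d (fun i k => rsum (fun m => y m * w m i k)) = rsum (fun m => y m * pdot d (w m)).
Proof.
rewrite /pdot /adot.
rewrite (rsum_ext (G := fun i => rsum (fun m => rsum (fun k => y m * (d i k * w m i k))))); last first.
  move=> i. rewrite rsum_swap. apply: rsum_ext => k. rewrite -rsum_mull. apply: rsum_ext => m; ring.
rewrite rsum_swap. apply: rsum_ext => m. rewrite -rsum_mull. apply: rsum_ext => i. by rewrite -rsum_mull.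
Qed.

Lemma mono_of N n Theta (Xs : 'I_N -> ('I_n -> R) -> Prop) f g pgf (gg : prof N n -> Theta -> prof N n) gt
  (th0 : Theta) (i0 i1 : 'I_N) (k0 : 'I_n) :
  assumption1 Xs f g pgf gg -> (forall x th, g x th = gt (aggr x) th) -> i0 <> i1 ->
  forall u v : prof N n, 0 <= pdot (psub u v) (fun i k => pgf i u k - pgf i v k).
Proof.
case=> H1 [H2 [H3 [H4 [H5 [H6 [chif [chig [hc [Hmf Hmg]]]]]]]]] Hgt hi u v.
pose e : prof N n := fun i k => if k == k0 then (if i == i0 then 1 else 0) - (if i == i1 then 1 else 0) else 0.
pose z0 : prof N n := fun _ _ => 0.
have ha : forall k, aggr (psub e z0) k = 0.
  move=> k. rewrite /aggr /psub /e /z0. case: (k == k0).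
    rewrite (rsum_ext (G := fun i => (if i == i0 then 1 else 0) - (if i == i1 then 1 else 0))); last by move=> i /=; rewrite Rminus_0_r.
    rewrite rsum_sub (rsum_pick i0 (fun _ => 1)) (rsum_pick i1 (fun _ => 1)). ring.
  rewrite (rsum_ext (G := fun _ => 0)) ?rsum_0 // => i /=; ring.
have h0 : pdot (psub e z0) (psub (gg e th0) (gg z0 th0)) = 0.
  rewrite pdot_subr (pdot_comm _ (gg e th0)) (pdot_comm _ (gg z0 th0)).
  rewrite (agg_dir H2 Hgt) // (agg_dir H2 Hgt) //. ring.
have hp : 1 <= pnorm (psub e z0).
  have := comp_le_pnorm (psub e z0) i0 k0. rewrite /psub /e /z0 !eqxx.
  have -> : (i0 == i1) = false by apply/eqP.
  have -> : 1 - 0 - 0 = 1 by ring. by rewrite Rabs_R1.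
have := Hmg e z0 th0. rewrite h0 => hg.
have hp2 : 1 <= pnorm (psub e z0) ^ 2 by rewrite /= Rmult_1_r; nra.
move: hg hp2. set P := pnorm (psub e z0) ^ 2 => hg hp2.
have hchig : chig <= 0 by nra.
have := Hmf u v. have := pow2_ge_0 (pnorm (psub u v)). nra.
Qed.

Lemma sqrt_le_inv a b : 0 <= a -> 0 <= b -> sqrt a <= sqrt b -> a <= b.
Proof. move=> ha hb h. case: (Rle_dec a b) => // /Rnot_le_lt hl.
have := sqrt_lt_1_alt b a (conj hb hl). lra. Qed.

Lemma uniq_agg (N n : nat) (Theta : Type) (Xs : 'I_N -> ('I_n -> R) -> Prop)
    (f : 'I_N -> prof N n -> R) (g : prof N n -> Theta -> R)
    (pgf : 'I_N -> prof N n -> ('I_n -> R)) (gg : prof N n -> Theta -> prof N n)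
    (l : seq Theta) x1 y1 x2 y2 :
  assumption1 Xs f g pgf gg ->
  (exists gt, forall x th, g x th = gt (aggr x) th) ->
  aggr x1 = aggr x2 ->
  min_norm_sol Xs pgf g gg l x1 y1 -> min_norm_sol Xs pgf g gg l x2 y2 -> x1 = x2.
Proof.
move=> HA [gt Hgt] eagg [Hs1 Hm1] [Hs2 Hm2].
have HA' := HA.
case: HA' => H1 [H2 [H3 [H4 [H5 [H6 _]]]]].
have [hx1 [hy1 [Hvx1 Hvy1]]] := (vi_split Xs pgf g gg x1 y1).1 Hs1.
have [hx2 [hy2 [Hvx2 Hvy2]]] := (vi_split Xs pgf g gg x2 y2).1 Hs2.
have th0 : Theta. by case: (l) (simplex_nonempty hy1) => [//|th ?] _; exact th.
suff main : forall i0 i1 : 'I_N, i0 <> i1 -> 'I_n -> x1 = x2.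
  apply: functional_extensionality => i; apply: functional_extensionality => k.
  case: (classic (exists i', i' <> i)) => [[i' hi']|hno].
    by rewrite (main i' i hi' k).
  have hall : forall j, j = i. move=> j; apply: NNPP => hj; apply: hno; by exists j.
  have := congr1 (fun a => a k) eagg. rewrite /aggr (rsum_single _ hall) (rsum_single (fun j => x2 j k) hall). by [].
move=> i0 i1 hi k0.
have mono := mono_of th0 k0 HA Hgt hi.
have ggE : forall x th, aggr x = aggr x1 -> gg x th = gg x1 th.
  move=> x th e; exact: (gg_agg H2 Hgt th e).
have gE : forall x th, aggr x = aggr x1 -> g x th = g x1 th.
  move=> x th e; by rewrite !Hgt e.
pose xm := pcomb (1/2) x1 x2.
pose ym := fun m => 1/2 * y1 m + 1/2 * y2 m.
have aggxm : aggr xm = aggr x1.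
  rewrite /xm aggr_pcomb eagg. apply: functional_extensionality => k; ring.
have aggx2 : aggr x2 = aggr x1 by rewrite eagg.
pose c (y : 'I_(size l) -> R) : prof N n := fun i k => rsum (fun m => y m * gg x1 (sample m) i k).
have FxE : forall x y, aggr x = aggr x1 -> Fx pgf gg x y = (fun i k => pgf i x k + c y i k).
  move=> x y e. apply: functional_extensionality => i; apply: functional_extensionality => k.
  rewrite /Fx /c. congr (_ + _). apply: rsum_ext => m. by rewrite ggE.
have orth : forall y, pdot (psub x2 x1) (c y) = 0.
  move=> y. rewrite /c cdot (rsum_ext (G := fun _ => 0)) ?rsum_0 // => m.
  rewrite pdot_comm (agg_dir H2 Hgt); first ring.
  move=> k. rewrite aggr_psub eagg. ring.
have hxm : inX Xs xm.
  move=> i. exact: (proj2 (proj2 (H3 i)) (x1 i) (x2 i) (1/2) (hx1 i) (hx2 i) ltac:(lra)).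
have hym : in_simplex ym.
  case: hy1 => h10 h11; case: hy2 => h20 h21. split.
    move=> m; rewrite /ym; have := h10 m; have := h20 m; lra.
  by rewrite /ym rsum_add !rsum_mull h11 h21; field.
have stepA : forall xk yk, aggr xk = aggr x1 -> vi_x Xs pgf gg xk yk ->
    forall x'', inX Xs x'' -> 0 <= pdot (psub x'' xk) (fun i k => pgf i x'' k + c yk i k).
  move=> xk yk e Hv x'' hx''. have := Hv x'' hx''. rewrite FxE //. have := mono x'' xk.
  have -> : pdot (psub x'' xk) (fun i k => pgf i x'' k + c yk i k) =
    1 * pdot (psub x'' xk) (fun i k => pgf i xk k + c yk i k) +
    1 * pdot (psub x'' xk) (fun i k => pgf i x'' k - pgf i xk k) + 0 * pdot x'' x''.
    rewrite !pdot_dsum. apply: dsum_lin3 => i k. ring.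
  lra.
have stepB : forall x'', inX Xs x'' -> 0 <= pdot (psub x'' xm) (fun i k => pgf i x'' k + c ym i k).
  move=> x'' hx''.
  have A1 := stepA x1 y1 erefl Hvx1 x'' hx''. have A2 := stepA x2 y2 aggx2 Hvx2 x'' hx''.
  have -> : pdot (psub x'' xm) (fun i k => pgf i x'' k + c ym i k) =
    1/2 * pdot (psub x'' x1) (fun i k => pgf i x'' k + c y1 i k) +
    1/2 * pdot (psub x'' x2) (fun i k => pgf i x'' k + c y2 i k) +
    (-1/4) * pdot (psub x2 x1) (psub (c y1) (c y2)).
    rewrite !pdot_dsum. apply: dsum_lin3 => i k.
    have -> : c ym i k = 1/2 * c y1 i k + 1/2 * c y2 i k.
      rewrite /c /ym -!rsum_mull -rsum_add. apply: rsum_ext => m; ring.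
    rewrite /psub /xm /pcomb. field.
  rewrite pdot_subr !orth. lra.
have Hvxm : vi_x Xs pgf gg xm ym.
  move=> x' hx'. rewrite FxE //. set d := psub x' xm.
  pose xt t := padd xm (pscale t d).
  have hxt : forall t, 0 <= t <= 1 -> inX Xs (xt t).
    move=> t ht i.
    have -> : xt t i = acomb t (x' i) (xm i).
      apply: functional_extensionality => k. rewrite /xt /padd /pscale /d /psub /acomb; ring.
    exact: (proj2 (proj2 (H3 i)) (x' i) (xm i) t (hx' i) (hxm i) ht).
  have pgfG : forall i, exists G : prof N n -> prof N n, forall x, inX Xs x ->
      pgf i x = G x i /\ differentiable_map_at G x.
    move=> i. case: (H6 i) => U [_ [_ [hU [G HG]]]]. exists G => x hx.
    have [hg hd] := HG x (hU x hx). split => //.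
    exact: (agrad_unique (H1 i x) (grad_block i hg)).
  have Hbd : forall eps, 0 < eps -> exists T, 0 < T /\ forall t, 0 < t < T -> forall i,
      t <= 1 -> Rabs (adot (d i) (fun k => pgf i (xt t) k - pgf i xm k)) <= eps.
    move=> eps he. apply: fin_unif => i.
    case: (pgfG i) => G HG.
    have [_ hdm] := HG xm hxm.
    case: (diff_dir d hdm) => K [T [hK [hT HT]]].
    pose D := rsum (fun k => Rabs (d i k)).
    have hD : 0 <= D by apply: rsum_ge0 => k; exact: Rabs_pos.
    have hq : 0 < eps / (K * D + 1) by apply: Rdiv_lt_0_compat; nra.
    exists (Rmin T (eps / (K * D + 1))); split; first exact: Rmin_pos.
    move=> t [ht0 ht1] ht.
    have htT : 0 < t < T by have := Rmin_l T (eps / (K * D + 1)); lra.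
    have hte : t < eps / (K * D + 1) by have := Rmin_r T (eps / (K * D + 1)); lra.
    rewrite (proj1 (HG _ (hxt t (conj (Rlt_le _ _ ht0) ht)))) (proj1 (HG _ hxm)).
    apply: Rle_trans (abs_adot_le (c := t * K) _ _) _.
      move=> k. exact: (HT t htT i k).
    rewrite -/D.
    have : t * (K * D + 1) < eps.
      move: hte. move/(Rmult_lt_compat_r (K * D + 1)) => /(_ ltac:(nra)).
      rewrite /Rdiv Rmult_assoc Rinv_l; nra.
    nra.
  have hc1 : 0 <= rsum (fun _ : 'I_N => 1) by apply: rsum_ge0 => _; lra.
  apply: (small_le hc1) => eps he.
  case: (Hbd eps he) => T [hT HT].
  case: (pick_t hT hT) => t [ht [_ ht1]].
  have hB := stepB (xt t) (hxt t (conj (Rlt_le _ _ (proj1 ht)) ht1)).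
  have e1 : psub (xt t) xm = pscale t d.
    apply: functional_extensionality => i; apply: functional_extensionality => k.
    rewrite /xt /psub /padd /pscale; ring.
  rewrite e1 pdot_comm pdot_scale in hB.
  have hB' : 0 <= pdot (fun i k => pgf i (xt t) k + c ym i k) d.
    apply: (Rmult_le_reg_l t); first lra. lra.
  have e2 : pdot (fun i k => pgf i (xt t) k + c ym i k) d =
      pdot d (fun i k => pgf i xm k + c ym i k) +
      rsum (fun i => adot (d i) (fun k => pgf i (xt t) k - pgf i xm k)).
    rewrite pdot_comm /pdot -rsum_add. apply: rsum_ext => i.
    rewrite /adot -rsum_add. apply: rsum_ext => k. ring.
  have e3 : rsum (fun i => adot (d i) (fun k => pgf i (xt t) k - pgf i xm k)) <=
      eps * rsum (fun _ : 'I_N => 1).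
    rewrite -rsum_mull. apply: rsum_le => i. rewrite Rmult_1_r.
    apply: Rle_trans (Rle_abs _) _. exact: HT.
  lra.
have Hvym : vi_y g xm ym.
  move=> w hw. have h1 := Hvy1 w hw. have h2 := Hvy2 w hw.
  rewrite (rsum_ext (F := fun m => w m * g xm (sample m)) (G := fun m => w m * g x1 (sample m))); last by move=> m; rewrite (gE xm).
  rewrite (rsum_ext (F := fun m => w m * g x2 (sample m)) (G := fun m => w m * g x1 (sample m))) in h2; last by move=> m; rewrite (gE x2).
  rewrite (rsum_ext (F := fun m => y2 m * g x2 (sample m)) (G := fun m => y2 m * g x1 (sample m))) in h2; last by move=> m; rewrite (gE x2).
  rewrite (rsum_lin3 (A := fun m => ym m * g xm (sample m)) (B := fun m => y1 m * g x1 (sample m)) (C := fun m => y2 m * g x1 (sample m))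
     (D := fun m => y1 m * g x1 (sample m)) (a := 1/2) (b := 1/2) (c := 0)).
    lra.
  move=> m. rewrite /ym (gE xm) //. ring.
have Hsm : VI_sol Xs pgf g gg l xm ym by apply/vi_split.
have n1 := Hm1 _ _ Hsm. have n12 := Hm1 _ _ Hs2. have n21 := Hm2 _ _ Hs1.
move: n1 n12 n21. rewrite /znorm.
have q1 : 0 <= pdot x1 x1 + rsum (fun m => y1 m * y1 m).
  have := pdot_ge0 x1. have : 0 <= rsum (fun m => y1 m * y1 m) by apply: rsum_ge0 => m; nra. lra.
have q2 : 0 <= pdot x2 x2 + rsum (fun m => y2 m * y2 m).
  have := pdot_ge0 x2. have : 0 <= rsum (fun m => y2 m * y2 m) by apply: rsum_ge0 => m; nra. lra.
have qm : 0 <= pdot xm xm + rsum (fun m => ym m * ym m).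
  have := pdot_ge0 xm. have : 0 <= rsum (fun m => ym m * ym m) by apply: rsum_ge0 => m; nra. lra.
move=> /(sqrt_le_inv q1 qm) n1 /(sqrt_le_inv q1 q2) n12 /(sqrt_le_inv q2 q1) n21.
have ex : pdot xm xm = 1/2 * pdot x1 x1 + 1/2 * pdot x2 x2 + (-1/4) * pdot (psub x1 x2) (psub x1 x2).
  rewrite !pdot_dsum. apply: dsum_lin3 => i k. rewrite /xm /pcomb /psub. field.
have ey : rsum (fun m => ym m * ym m) = 1/2 * rsum (fun m => y1 m * y1 m) + 1/2 * rsum (fun m => y2 m * y2 m)
   + (-1/4) * rsum (fun m => (y1 m - y2 m) * (y1 m - y2 m)).
  apply: rsum_lin3 => m. rewrite /ym. field.
have hyd : 0 <= rsum (fun m => (y1 m - y2 m) * (y1 m - y2 m)) by apply: rsum_ge0 => m; exact: Rle_0_sqr.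
have hxd := pdot_ge0 (psub x1 x2).
have hz : pdot (psub x1 x2) (psub x1 x2) = 0 by lra.
apply: functional_extensionality => i; apply: functional_extensionality => k.
have := pdot_self0 hz i k. rewrite /psub. lra.
Qed.

Unset Implicit Arguments. Set Strict Implicit.
Theorem proposition4 (N n : nat) (Theta : Type)
    (Xs : 'I_N -> ('I_n -> R) -> Prop)
    (f : 'I_N -> prof N n -> R) (g : prof N n -> Theta -> R)
    (pgf : 'I_N -> prof N n -> ('I_n -> R)) (gg : prof N n -> Theta -> prof N n)
    (HA1 : assumption1 Xs f g pgf gg)
    (Hgame : forall S : seq Theta, S <> [::] ->
       (exists! x, is_NE Xs f g S x) \/
       ((exists gt : ('I_n -> R) -> Theta -> R, forall x th, g x th = gt (aggr x) th) /\
        (forall x x', is_NE Xs f g S x -> is_NE Xs f g S x' -> aggr x = aggr x')))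
    (l : seq Theta) (xs : prof N n) (ys : 'I_(size l) -> R)
    (Hmin : min_norm_sol Xs pgf g gg l xs ys) :
  Phi_is Xs pgf g gg (supp_samples l ys) xs /\ Phi_is Xs pgf g gg l xs.
Proof.
have HA' := HA1. case: HA' => H1 [H2 [H3 [H4 [H5 [H6 _]]]]].
have H4c : forall th i x, (forall j, j <> i -> Xs j (x j)) ->
    aconvex_fun_on (Xs i) (fun z => f i (upd x i z) + g (upd x i z) th).
  move=> th i x h; exact: (proj1 (H4 th i x h)).
have NE : forall (L : seq Theta) x y, VI_sol Xs pgf g gg L x y -> is_NE Xs f g L x.
  move=> L x y; exact: (vi_NE H1 H2 H4c).
case: Hmin => Hs Hm.
have [hx [hy [Hvx Hvy]]] := (vi_split Xs pgf g gg xs ys).1 Hs.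
have hl := simplex_nonempty hy.
have Ul : forall x' y', min_norm_sol Xs pgf g gg l x' y' -> x' = xs.
  move=> x' y' Hm'. case: (Hgame l hl) => [[x0 [hx0 hu]] | [hgt hagg]].
  - have e1 := hu _ (NE _ _ _ (proj1 Hm')). have e2 := hu _ (NE _ _ _ Hs). by rewrite -e1 -e2.
  - apply: (uniq_agg HA1 hgt _ Hm' (conj Hs Hm)). exact: hagg (NE _ _ _ (proj1 Hm')) (NE _ _ _ Hs).
split; last first.
  split; [by exists ys; split | exact: Ul].
have hsz : leq 1 (size l) by case: (l) hl.
pose d0 : 'I_(size l) := Ordinal hsz.
have ys0 := proj1 hy.
set S := supp_samples l ys.
pose ys' := fun j : 'I_(size S) => ys (idx d0 j).
pose ex := ext (ys := ys) d0.
have K1 : forall x (w : 'I_(size S) -> R), Fx pgf gg (l:=S) x w = Fx pgf gg (l:=l) x (ex w).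
  move=> x w. apply: functional_extensionality => i; apply: functional_extensionality => k.
  rewrite /Fx /ex. congr (_ + _). rewrite (supp_R2 d0 w (fun m => gg x (sample m) i k)).
  apply: rsum_ext => j. by rewrite (supp_R1 d0 j).
have K2 : forall x, Fx pgf gg (l:=S) x ys' = Fx pgf gg (l:=l) x ys.
  move=> x. apply: functional_extensionality => i; apply: functional_extensionality => k.
  rewrite /Fx. congr (_ + _). rewrite -(sum_idx_ys d0 ys0 (fun m => gg x (sample m) i k)).
  apply: rsum_ext => j. by rewrite /ys' (supp_R1 d0 j).
have K3 : forall x (w : 'I_(size S) -> R),
    rsum (fun j => w j * g x (sample j)) = rsum (fun m => ex w m * g x (sample m)).
  move=> x w. rewrite /ex (supp_R2 d0 w (fun m => g x (sample m))). apply: rsum_ext => j. by rewrite (supp_R1 d0 j).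
have K3' : forall x, rsum (fun j => ys' j * g x (sample j)) = rsum (fun m => ys m * g x (sample m)).
  move=> x. rewrite -(sum_idx_ys d0 ys0 (fun m => g x (sample m))). apply: rsum_ext => j. by rewrite /ys' (supp_R1 d0 j).
have K4 : forall (x : prof N n) (w : 'I_(size S) -> R), znorm x w = znorm x (ex w).
  move=> x w. rewrite /znorm /ex. by rewrite (ext_sq d0 w).
have K4' : znorm xs ys' = znorm xs ys.
  rewrite /znorm. congr (sqrt (_ + _)). rewrite -(sum_idx_ys d0 ys0 ys). by [].
have hys' : in_simplex ys' := restr_simplex d0 ys0 hy.
have V1 : VI_sol Xs pgf g gg S xs ys'.
  apply/vi_split. split => //; split => //; split.
    move=> x' hx'. rewrite K2. exact: Hvx.
  move=> w hw. rewrite K3 K3'. exact: Hvy _ (ext_simplex d0 hw).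
have hS : S <> [::] := simplex_nonempty hys'.
have V2 : forall x' w, VI_sol Xs pgf g gg S x' w -> VI_sol Xs pgf g gg l x' (ex w).
  move=> x' w Hs'.
  have hgeq : forall th, g x' th = g xs th.
    case: (Hgame S hS) => [[x0 [hx0 hu]] | [[gt hgt] hagg]].
    - have e1 := hu _ (NE _ _ _ Hs'). have e2 := hu _ (NE _ _ _ V1). by rewrite -e1 -e2.
    - move=> th. by rewrite !hgt (hagg _ _ (NE _ _ _ Hs') (NE _ _ _ V1)).
  have [hx' [hw [Hvx' Hvy']]] := (vi_split Xs pgf g gg x' w).1 Hs'.
  apply/vi_split. split => //; split; first exact: ext_simplex.
  split.
    move=> x'' hx''. rewrite -K1. exact: Hvx'.
  move=> w'' hw''. rewrite -K3.
  rewrite (rsum_ext (F := fun m => w'' m * g x' (sample m)) (G := fun m => w'' m * g xs (sample m))); last by move=> m; rewrite hgeq.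
  apply: Rle_trans (Hvy _ hw'') _. rewrite -K3'.
  rewrite (rsum_ext (F := fun j => ys' j * g xs (sample j)) (G := fun j => ys' j * g x' (sample j))); last by move=> j; rewrite hgeq.
  exact: Hvy' _ hys'.
split.
  exists ys'. split => // x'' w Hs''. rewrite K4' (K4 x'' w). exact: Hm _ _ (V2 _ _ Hs'').
move=> x' w [Hs' Hm'].
apply: (Ul x' (ex w)). split; first exact: V2.
move=> a b Hab. rewrite -K4. apply: Rle_trans (Hm' _ _ V1) _. rewrite K4'. exact: Hm.
Qed.
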